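(* Let $k,l,m$ be positive integers and let $G=G(k,l,m)$ be the tree defined as follows: start with a vertex $y$; add vertices $x_1,\dots,x_k$ each adjacent to $y$; for each $a\in\{1,\dots,k\}$ add vertices $w_{a,1},\dots,w_{a,l}$ each adjacent to $x_a$; for each $a,b$ add a vertex $v_{a,b}$ adjacent to $w_{a,b}$; and for each $a,b$ add $m$ leaves $u_{a,b,1},\dots,u_{a,b,m}$ adjacent to $v_{a,b}$. Then $n(G)=klm+2kl+k+1$, $\gamma_t(G)=2kl+1$, and $\Gamma_t(G)=k\big((m+1)^l-m^l\big)^k$.
   Context: For a graph $G$ without isolated vertices, a set $D\subseteq V(G)$ is total dominating if every vertex of $G$ has a neighbour in $D$. The total domination number $\gamma_t(G)$ is the minimum size of a total dominating set, and $\Gamma_t(G)$ is the number of total dominating sets of size $\gamma_t(G)$. $n(G)$ is the number of vertices. *)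

(* Defs.v *)
From mathcomp Require Import all_boot.
Set Implicit Arguments. Unset Strict Implicit. Unset Printing Implicit Defensive.

(* A simple graph: vertex set a finType T, adjacency a relation e : rel T
   (intended symmetric and irreflexive). *)

Definition total_dominating (T : finType) (e : rel T) (D : {set T}) : bool :=
  [forall v : T, [exists u in D, e v u]].

(* total domination number: minimum size of a total dominating set
   (defaults to #|T| if there is none, which never happens without
   isolated vertices). *)
Definition gamma_t (T : finType) (e : rel T) : nat :=
  \big[minn/#|T|]_(D : {set T} | total_dominating e D) #|D|.

Definition Gamma_t (T : finType) (e : rel T) : nat :=
  #|[set D : {set T} | total_dominating e D & #|D| == gamma_t e]|.

(* Vertices:
     Y            = inl (inl (inl (inl tt)))
     X a          = inl (inl (inl (inr a)))
     W (a,b)      = inl (inl (inr (a,b)))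
     V (a,b)      = inl (inr (a,b))
     U (a,b,c)    = inr (a,b,c)                                    *)
Definition Gvtx (k l m : nat) : finType :=
  (unit + 'I_k + ('I_k * 'I_l) + ('I_k * 'I_l) + ('I_k * 'I_l * 'I_m))%type.

Definition Gpar (k l m : nat) (x : Gvtx k l m) : option (Gvtx k l m) :=
  match x with
  | inl (inl (inl (inl _))) => None
  | inl (inl (inl (inr a))) => Some (inl (inl (inl (inl tt))))
  | inl (inl (inr (a, b))) => Some (inl (inl (inl (inr a))))
  | inl (inr (a, b)) => Some (inl (inl (inr (a, b))))
  | inr (a, b, c) => Some (inl (inr (a, b)))
  end.

Definition Gadj (k l m : nat) : rel (Gvtx k l m) :=
  fun x y => (Gpar x == Some y) || (Gpar y == Some x).

(* Main.v *)
Require Import Defs.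
From mathcomp Require Import all_boot zify.
Set Implicit Arguments. Unset Strict Implicit. Unset Printing Implicit Defensive.
Section G.
Variables k l m : nat.
Notation T := (Gvtx k l m).
Definition vY : T := inl (inl (inl (inl tt))).
Definition vX a : T := inl (inl (inl (inr a))).
Definition vW a b : T := inl (inl (inr (a,b))).
Definition vV a b : T := inl (inr (a,b)).
Definition vU a b c : T := inr (a,b,c).

Lemma cardD (D : {set T}) : #|D| = (vY \in D) + \sum_a (vX a \in D) +
  \sum_(p : 'I_k * 'I_l) ((vW p.1 p.2 \in D) + (vV p.1 p.2 \in D) + \sum_c (vU p.1 p.2 c \in D)).
Proof.
rewrite -sum1_card big_mkcond /=.
rewrite !big_sumType /=.
have U1 : forall F : unit -> nat, \sum_i F i = F tt.
  by move=> F; rewrite (big_pred1 tt) // => -[].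
rewrite U1 /= -!addnA; congr (_ + (_ + _)).
rewrite !big_split /= pair_bigA /= addnA; congr (_ + _ + _).
- by apply: eq_bigr => -[a b].
- by apply: eq_bigr => -[a b].
- by apply: eq_bigr => -[[a b] c].
Qed.

Lemma cardT : #|T| = k * l * m + 2 * k * l + k + 1.
Proof. rewrite /Gvtx !card_sum !card_prod card_unit !card_ord. lia. Qed.

Definition TDc (D : {set T}) := [&& [exists a, vX a \in D],
  [forall a, (vY \in D) || [exists b, vW a b \in D]],
  [forall a, forall b, (vW a b \in D) || [exists c, vU a b c \in D]] &
  [forall a, forall b, vV a b \in D]].

Lemma TD_TDc D : 0 < m -> total_dominating (@Gadj k l m) D = TDc D.
Proof.
move=> hm; apply/idP/idP.
- move/forallP=> H; apply/and4P; split.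
  + have /exists_inP[u uD] := H vY; move: u uD.
    case=> [[[[[]|a]|[a b]]|[a b]]|[[a b] c]] uD; rewrite /Gadj;
      move=> /orP[/eqP E|/eqP E]; simpl in E; try discriminate.
    by apply/existsP; exists a.
  + apply/forallP => a.
    have /exists_inP[u uD] := H (vX a); move: u uD.
    case=> [[[[[]|a']|[a' b]]|[a' b]]|[[a' b] c]] uD; rewrite /Gadj;
      move=> /orP[/eqP E|/eqP E]; simpl in E; try discriminate.
    * by rewrite uD.
    * case: E => ?; subst a'.
      by apply/orP; right; apply/existsP; exists b.
  + apply/forallP => a; apply/forallP => b.
    have /exists_inP[u uD] := H (vV a b); move: u uD.
    case=> [[[[[]|a']|[a' b']]|[a' b']]|[[a' b'] c]] uD; rewrite /Gadj;
      move=> /orP[/eqP E|/eqP E]; simpl in E; try discriminate.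
    * by case: E => ??; subst; rewrite uD.
    * case: E => ??; subst.
      by apply/orP; right; apply/existsP; exists c.
  + apply/forallP => a; apply/forallP => b.
    have /exists_inP[u uD] := H (vU a b (Ordinal hm)); move: u uD.
    case=> [[[[[]|a']|[a' b']]|[a' b']]|[[a' b'] c]] uD; rewrite /Gadj;
      move=> /orP[/eqP E|/eqP E]; simpl in E; try discriminate.
    by case: E => ??; subst.
- case/and4P => /existsP[a0 H1] /forallP H2 /forallP H3 /forallP H5.
  apply/forallP; case=> [[[[[]|a]|[a b]]|[a b]]|[[a b] c]].
  + by apply/exists_inP; exists (vX a0) => //; rewrite /Gadj /= ?eqxx ?orbT.
  + case/orP: (H2 a) => [HY|/existsP[b Hb]].
    * by apply/exists_inP; exists vY => //; rewrite /Gadj /= ?eqxx.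
    * by apply/exists_inP; exists (vW a b) => //; rewrite /Gadj /= ?eqxx ?orbT.
  + by apply/exists_inP; exists (vV a b); [exact: (forallP (H5 a)) | rewrite /Gadj /= ?eqxx ?orbT].
  + case/orP: (forallP (H3 a) b) => [HW|/existsP[c Hc]].
    * by apply/exists_inP; exists (vW a b) => //; rewrite /Gadj /= ?eqxx.
    * by apply/exists_inP; exists (vU a b c) => //; rewrite /Gadj /= ?eqxx ?orbT.
  + by apply/exists_inP; exists (vV a b); [exact: (forallP (H5 a)) | rewrite /Gadj /= ?eqxx].
Qed.

Definition Fp (D : {set T}) (p : 'I_k * 'I_l) :=
  (vW p.1 p.2 \in D) + (vV p.1 p.2 \in D) + \sum_c (vU p.1 p.2 c \in D).

Lemma TDc_parts D : TDc D -> 1 <= \sum_a (vX a \in D) /\ forall p, 2 <= Fp D p.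
Proof.
case/and4P => /existsP[a0 H1] _ /forallP H3 /forallP H5; split.
  by rewrite (bigD1 a0) //= H1.
move=> [a b]; rewrite /Fp /= (forallP (H5 a) b).
case/orP: (forallP (H3 a) b) => [-> //|/existsP[c Hc]].
by rewrite (bigD1 c) //= Hc; lia.
Qed.

Lemma sum2 : \sum_(p : 'I_k * 'I_l) 2 = 2 * k * l.
Proof. by rewrite sum_nat_const card_prod !card_ord; lia. Qed.

Lemma TDc_lb D : TDc D -> 2 * k * l + 1 <= #|D|.
Proof.
move=> /TDc_parts [h1 h2]; rewrite cardD -sum2.
have : \sum_(p : 'I_k * 'I_l) 2 <= \sum_p Fp D p by apply: leq_sum => p _; exact: h2.
rewrite /Fp => H; rewrite addnC; apply: leq_add => //; exact: leq_trans h1 (leq_addl _ _).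
Qed.

Lemma TDc_eq D : TDc D -> #|D| = 2 * k * l + 1 ->
  [/\ vY \notin D, \sum_a (vX a \in D) = 1 &
      forall a b, (vW a b \in D) + \sum_c (vU a b c \in D) = 1].
Proof.
move=> TD E; have [h1 h2] := TDc_parts TD.
have hP : \sum_p Fp D p = \sum_(p : 'I_k * 'I_l) 2 + \sum_p (Fp D p - 2).
  rewrite -big_split; by apply: eq_bigr => p _; symmetry; exact: subnKC (h2 p).
have V1 : forall a b, vV a b \in D.
  by case/and4P: TD => _ _ _ /forallP H5 a b; exact: (forallP (H5 a) b).
have cD : #|D| = (vY \in D) + \sum_a (vX a \in D) + \sum_p Fp D p := cardD D.
rewrite hP sum2 E in cD.
have [hY x1 y0] : [/\ vY \notin D, \sum_a (vX a \in D) = 1 & \sum_p (Fp D p - 2) = 0].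
  move: h1 cD; move: (\sum_a _) (\sum_p (Fp D p - 2)) => x y.
  by case: (vY \in D) => h1 cD; [lia | split => //; lia].
split => // a b.
move/eqP: y0; rewrite sum_nat_eq0 => /forallP /(_ (a,b)) /eqP.
have := h2 (a, b); rewrite /Fp /= V1.
move: (vW a b \in D) (\sum_c _) => [] s /=; lia.
Qed.

Definition Fn := {ffun 'I_k -> {ffun 'I_l -> option 'I_m}}.
Definition psi (p : 'I_k * Fn) : {set T} := [set x : T | match x with
 | inl (inl (inl (inl _))) => false
 | inl (inl (inl (inr a))) => a == p.1
 | inl (inl (inr (a,b))) => p.2 a b == None
 | inl (inr _) => true
 | inr (a,b,c) => p.2 a b == Some c end].
Definition Dom := [set p : 'I_k * Fn | [forall a, exists b, p.2 a b == None]].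

Lemma SomeE (x y : 'I_m) : (Some x == Some y) = (x == y).
Proof. by apply/eqP/eqP => [[]|->]. Qed.

Lemma psi_TDc p : p \in Dom -> TDc (psi p).
Proof.
rewrite inE => /forallP H; apply/and4P; split.
- by apply/existsP; exists p.1; rewrite /vX inE /=.
- apply/forallP => a; case/existsP: (H a) => b Hb.
  by apply/orP; right; apply/existsP; exists b; rewrite /vW inE /=.
- apply/forallP => a; apply/forallP => b.
  case E: (p.2 a b) => [c|].
  + by apply/orP; right; apply/existsP; exists c; rewrite /vU inE /= E.
  + by rewrite /vW inE /= E.
- by apply/forallP => a; apply/forallP => b; rewrite /vV inE.
Qed.

Lemma psi_card p : #|psi p| = 2 * k * l + 1.
Proof.
rewrite cardD /vY inE /= add0n.
have -> : \sum_a (vX a \in psi p) = 1.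
  rewrite (bigD1 p.1) //= /vX inE /= eqxx big1 // => a /negPf.
  by rewrite inE /= => ->.
rewrite -sum2 addnC; congr (_ + _); apply: eq_bigr => -[a b] _ /=.
rewrite /vW /vV /vU !inE /=.
under eq_bigr do rewrite inE /=.
case: (p.2 a b) => [c|] /=.
- rewrite (bigD1 c) //= SomeE eqxx big1 // => c' /negPf.
  by rewrite SomeE eq_sym => ->.
- by rewrite big1.
Qed.

Lemma psi_inj : injective psi.
Proof.
move=> [a1 f1] [a2 f2] /setP E.
have ea : a1 = a2.
  by have := E (vX a1); rewrite /vX !inE /= eqxx => /esym/eqP.
subst a2; congr pair; apply/ffunP => a; apply/ffunP => b.
case E1: (f1 a b) => [c|].
- by have := E (vU a b c); rewrite /vU !inE /= E1 eqxx => /esym/eqP.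
- by have := E (vW a b); rewrite /vW !inE /= E1 eqxx => /esym/eqP.
Qed.

Lemma blk (w : bool) (u : pred 'I_m) : w + \sum_c u c = 1 ->
  w = ([pick c | u c] == None) /\ forall c, u c = ([pick c | u c] == Some c).
Proof.
case: pickP => [c0 Hc0|H0].
- rewrite (bigD1 c0) //= Hc0 => E.
  have [w0 r0] : w = false /\ \sum_(c | c != c0) u c = 0.
    by move: E; move: (\sum_(c | c != c0) u c) => r; case: w => /=; lia.
  move/eqP: r0; rewrite sum_nat_eq0 => /forall_inP H.
  split; first by rewrite w0.
  move=> c; rewrite SomeE; case: (eqVneq c0 c) => [<-|ne]; first by rewrite Hc0.
  by have := H c; rewrite eq_sym ne => /(_ isT)/eqP; case: (u c).
- rewrite big1 => [E|c _]; last by rewrite H0.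
  split; first by case: w E.
  by move=> c; rewrite H0.
Qed.

Lemma charD D : TDc D -> #|D| = 2 * k * l + 1 -> exists2 p, p \in Dom & D = psi p.
Proof.
move=> TD E; have [hY x1 hB] := TDc_eq TD E.
move/eqP: x1 => /sum_nat_eq1 [a0 [_ Ha0 Hoth]].
have V1 : forall a b, vV a b \in D.
  by case/and4P: TD => _ _ _ /forallP H5 a b; exact: (forallP (H5 a) b).
exists (a0, [ffun a => [ffun b => [pick c | vU a b c \in D]]]).
- rewrite inE; apply/forallP => a /=.
  case/and4P: TD => _ /forallP /(_ a) + _ _; rewrite (negbTE hY) /=.
  case/existsP => b Hb; apply/existsP; exists b; rewrite !ffunE.
  by rewrite -(blk (hB a b)).1.
- apply/setP; case=> [[[[[]|a]|[a b]]|[a b]]|[[a b] c]]; rewrite inE /=.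
  + exact: negbTE hY.
  + case: (eqVneq a a0) => [->|ne].
    * by move: Ha0; rewrite /vX; case: (_ \in D).
    * by move: (Hoth a ne isT); rewrite /vX; case: (_ \in D).
  + by rewrite !ffunE; exact: (blk (hB a b)).1.
  + exact: V1.
  + by rewrite !ffunE; exact: (blk (hB a b)).2 c.
Qed.

Lemma card_Dom : #|Dom| = k * ((m + 1) ^ l - m ^ l) ^ k.
Proof.
set S := [set g : {ffun 'I_l -> option 'I_m} | [exists b, g b == None]].
have -> : Dom = setX [set: 'I_k] [set f : Fn | [forall a, f a \in S]].
  apply/setP => -[a f]; rewrite !inE /=.
  by apply: eq_forallb => a'; rewrite inE.
rewrite cardsX cardsT card_ord; congr (_ * _).
have cC : #|~: S| = m ^ l.
  transitivity #|@ffun_on 'I_l (predC1 (None : option 'I_m))|.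
    apply: eq_card => f; rewrite !inE negb_exists.
    apply/forallP/ffun_onP => H b; move: (H b); by rewrite inE.
  by rewrite card_ffun_on cardC1 card_option !card_ord.
have cS : #|S| = (m + 1) ^ l - m ^ l.
  have := cardsC S; rewrite card_ffun card_option !card_ord cC addn1 => H.
  by rewrite -H addnK.
transitivity #|@ffun_on 'I_k S|.
  apply: eq_card => f; rewrite inE; exact/forallP/ffun_onP.
by rewrite card_ffun_on card_ord cS.
Qed.
End G.

Lemma bigmin_le (I : finType) (P : pred I) (F : I -> nat) x i0 :
  P i0 -> \big[minn/x]_(i | P i) F i <= F i0.
Proof.
move=> Pi0; have : i0 \in index_enum I by rewrite mem_index_enum.
elim: (index_enum I) => // j r IH; rewrite inE big_cons => /predU1P[<-|ir].
  by rewrite Pi0 geq_minl.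
case: (P j); last exact: IH.
exact: leq_trans (geq_minr _ _) (IH ir).
Qed.

Theorem mainTheorem5 (k l m : nat) (hk : 0 < k) (hl : 0 < l) (hm : 0 < m) :
  [/\ #|Gvtx k l m| = k * l * m + 2 * k * l + k + 1,
      gamma_t (@Gadj k l m) = 2 * k * l + 1
    & Gamma_t (@Gadj k l m) = k * ((m + 1) ^ l - m ^ l) ^ k].
Proof.
have p0 : (Ordinal hk, [ffun _ => [ffun _ => None]] : Fn k l m) \in Dom k l m.
  rewrite inE; apply/forallP => a; apply/existsP; exists (Ordinal hl).
  by rewrite !ffunE.
have gE : gamma_t (@Gadj k l m) = 2 * k * l + 1.
  apply/eqP; rewrite eqn_leq; apply/andP; split.
  - rewrite -(@psi_card k l m (Ordinal hk, [ffun _ => [ffun _ => None]])).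
    apply: bigmin_le; rewrite /= TD_TDc //; exact: psi_TDc.
  - rewrite /gamma_t; elim/big_ind: _ => [|x y hx hy|D].
    + by rewrite cardT; lia.
    + by rewrite leq_min hx hy.
    + by rewrite TD_TDc // => /TDc_lb.
split => //; first exact: cardT.
rewrite /Gamma_t gE -card_Dom -(card_imset _ (@psi_inj k l m)).
apply: eq_card => D; rewrite inE; apply/andP/imsetP.
- by rewrite TD_TDc // => -[TD /eqP E]; exact: charD.
- move=> [p pD ->]; split; first by rewrite TD_TDc //; exact: psi_TDc.
  by rewrite psi_card.
Qed.
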